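(* For $k>3$ the Tanaka prolongation of the truncated double-graded free Lie algebra $\mathfrak{n}_k$ is supported in non-positive grading: $\hat{\mathfrak{n}}_k=\mathfrak{n}_k\oplus\mathfrak{g}_0$ with $\mathfrak{g}_0=\mathfrak{gl}(\mathfrak{g}_{-1})$.
   Context: The double-graded free Lie algebra with two-dimensional fundamental space is $\mathfrak{n}_\infty=\bigoplus_{i<0}\mathfrak{g}_i$ with $\mathfrak{g}_{-1}=\langle e_{10},e_{01}\rangle$, $e_{11}=[e_{10},e_{01}]$, and $\mathfrak{g}_{-j-1}=\langle e_{j,1},e_{j-1,2},\dots,e_{1,j}\rangle$, the only relations being $[e_{10},e_{i,j+1}]=[e_{01},e_{i+1,j}]=e_{i+1,j+1}$ (and $[e_{10},e_{i,j}]=e_{i+1,j}$, $[e_{01},e_{i,j}]=e_{i,j+1}$). The truncated algebra is $\mathfrak{n}_k=\mathfrak{g}_{-k}\oplus\dots\oplus\mathfrak{g}_{-1}$, with brackets between $\mathfrak{g}_{-i}$ and $\mathfrak{g}_{-j}$ zero when $i+j>k$. The Tanaka prolongation $\hat{\mathfrak{m}}=\bigoplus_i\mathfrak{g}_i$ of a fundamental graded nilpotent Lie algebra $\mathfrak{m}=\bigoplus_{i<0}\mathfrak{g}_i$ is the maximal graded Lie algebra whose negative part is $\mathfrak{m}$ and in which no nonzero element of non-negative degree commutes with all of $\mathfrak{g}_{-1}$; $\mathfrak{g}_0$ is the algebra of degree-zero derivations of $\mathfrak{m}$ (not required to preserve the splitting of $\mathfrak{g}_{-1}$), and $\mathfrak{g}_i$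 for $i>0$ is built successively. *)

(* Defs.v *)
From HB Require Import structures.
From mathcomp Require Import all_boot all_order all_algebra.
Set Implicit Arguments. Unset Strict Implicit. Unset Printing Implicit Defensive.
Import Order.TTheory GRing.Theory Num.Theory.
Local Open Scope ring_scope.

(* Generic setting: a graded nilpotent Lie algebra m = (+)_{j>=1} g_{-j}     *)
(* given by a finite basis B, a depth function dep : B -> nat (basis vector *)
(* b lies in g_{-(dep b)}), and structure constants cst a b e, meaning      *)
(*        [a, b] = \sum_e cst a b e * e .                                   *)
(* Vectors of m are coordinate functions B -> F.                            *)

Definition mbr (F : fieldType) (B : finType) (cst : B -> B -> B -> F)
  (v : B -> F) (b : B) : B -> F :=
  fun e => \sum_(a : B) v a * cst a b e.

Definition dsum (B : finType) (dep : B -> nat) (s : seq B) : nat :=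
  (\sum_(b <- s) dep b)%N.

Definition homog (F : fieldType) (B : finType) (dep : B -> nat) (j : nat)
  (v : B -> F) : Prop :=
  forall a, v a != 0 -> dep a = j.

(* An element u of degree d >= 0 of the prolongation is encoded by the       *)
(* function E : seq B -> (B -> F) of its iterated brackets                  *)
(*     E [:: b1; ...; br] = [...[[u, b1], b2], ..., br]                      *)
(* which is a vector of m as soon as the degree d - (dep b1 + ... + dep br)  *)
(* is negative (E is normalized to 0 on the other sequences).  Thus          *)
(* s |-> E (b :: s) encodes u(b) = [u, b].                                   *)
(* [tanaka_in cst dep n d E] (with fuel n > d) says that E encodes an        *)
(* element of g_d, following Tanaka's successive construction:               *)
(*   g_d = { u in (+)_{i<0} Hom(g_i, g_{i+d}) :                              *)
(*            u([x,y]) = [u x, y] + [x, u y] }                               *)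
(* where g_{i+d} for i+d >= 0 is the previously constructed component, and   *)
(* for w in g_l (l >= 0), [w, y] = w(y), [y, w] = - w(y).                    *)
(* For d = 0 this is the algebra of degree-0 derivations of m.               *)
Fixpoint tanaka_in (F : fieldType) (B : finType) (cst : B -> B -> B -> F)
  (dep : B -> nat) (n d : nat) (E : seq B -> B -> F) {struct n} : Prop :=
  match n with
  | 0 => False
  | n'.+1 =>
    [/\ (* normalization: E s is meaningless (set to 0) while the degree >= 0 *)
        forall s, (dsum dep s <= d)%N -> forall e, E s e = 0,
        forall s, (d < dsum dep s)%N -> homog dep (dsum dep s - d) (E s),
        forall s b, (d < dsum dep s)%N ->
          forall e, E (rcons s b) e = mbr cst (E s) b e,
        (* u(b) has degree d - dep b; if >= 0 it lies in that component *)
        forall b, (dep b <= d)%N -> tanaka_in cst dep n' (d - dep b) (fun s => E (b :: s))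
      & (* derivation rule: [u,[a,b]] = [[u,a],b] - [[u,b],a] *)
        forall a b s e,
          \sum_(c : B) cst a b c * E (c :: s) e = E (a :: b :: s) e - E (b :: a :: s) e ]
  end.

Definition tanaka_comp (F : fieldType) (B : finType) (cst : B -> B -> B -> F)
  (dep : B -> nat) (d : nat) (E : seq B -> B -> F) : Prop :=
  tanaka_in cst dep d.+1 d E.

(* Basis: e_{10}, e_{01} (degree -1) and e_{ij}, i,j >= 1, i+j <= k          *)
(* (degree -(i+j)).                                                          *)
Definition nk_pred (k : nat) (x : 'I_k.+1 * 'I_k.+1) : bool :=
  let i := nat_of_ord x.1 in let j := nat_of_ord x.2 in
  ((i + j)%N == 1%N) || [&& (1 <= i)%N, (1 <= j)%N & (i + j <= k)%N].

Definition nkB (k : nat) := {x : 'I_k.+1 * 'I_k.+1 | @nk_pred k x}.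

Definition nk_i (k : nat) (x : nkB k) : nat := nat_of_ord (val x).1.
Definition nk_j (k : nat) (x : nkB k) : nat := nat_of_ord (val x).2.

Definition nk_dep (k : nat) (x : nkB k) : nat := (nk_i x + nk_j x)%N.

(* sign of [x, y] (which, when nonzero, is +- e_{x_i + y_i, x_j + y_j}):
   [e10,e01] = e11 = -[e01,e10]; [e10,e_ij] = e_{i+1,j}, [e01,e_ij] = e_{i,j+1}
   (i,j >= 1) and antisymmetry; brackets between elements of degree <= -2
   vanish; brackets landing in degree < -k vanish (truncation, automatic
   since the target must be a basis vector of n_k). *)
Definition nk_sgn (F : fieldType) (k : nat) (x y : nkB k) : F :=
  if nk_dep x == 1%N then
    if nk_dep y == 1%N then
      (if (nk_i x == 1%N) && (nk_j y == 1%N) then 1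
       else if (nk_j x == 1%N) && (nk_i y == 1%N) then -1 else 0)
    else 1
  else if nk_dep y == 1%N then -1 else 0.

Definition nk_cst (F : fieldType) (k : nat) (x y e : nkB k) : F :=
  if (nk_i e == nk_i x + nk_i y)%N && (nk_j e == nk_j x + nk_j y)%N
  then @nk_sgn F k x y else 0.

(* Main.v *)
Require Import Defs.
From HB Require Import structures.
From mathcomp Require Import all_boot all_order all_algebra.
From mathcomp Require Import zify ring.
Import Order.TTheory GRing.Theory Num.Theory.
Local Open Scope ring_scope.
Set Implicit Arguments. Unset Strict Implicit.

Section NK.
Variable F : fieldType.
Variable k : nat.
Hypothesis hk : (3 < k)%N.

Local Notation B := (nkB k).
Local Notation ii := (@nk_i k).
Local Notation jj := (@nk_j k).
Local Notation dep := (@nk_dep k).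
Local Notation cst := (@nk_cst F k).
Local Notation br := (mbr cst).

Definition isb (I J : nat) : bool :=
  (I + J == 1)%N || [&& (0 < I)%N, (0 < J)%N & (I + J <= k)%N].

Lemma isbP (b : B) : isb (ii b) (jj b).
Proof. by case: b => [[i j]] /= H; rewrite /isb /nk_i /nk_j /=. Qed.

Lemma isb_ex I J : isb I J -> exists b : B, ii b = I /\ jj b = J.
Proof.
move=> H.
have HI : (I < k.+1)%N by move: H; rewrite /isb; lia.
have HJ : (J < k.+1)%N by move: H; rewrite /isb; lia.
have P : nk_pred (Ordinal HI, Ordinal HJ) by [].
by exists (exist (fun x => is_true (@nk_pred k x)) _ P).
Qed.

Lemma nk_inj (a b : B) : ii a = ii b -> jj a = jj b -> a = b.
Proof.
case: a => [[i j] Pa]; case: b => [[i' j'] Pb]; rewrite /nk_i /nk_j /= => h1 h2.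
apply: val_inj => /=; congr pair; exact: val_inj.
Qed.

Lemma dep_ge1 (b : B) : (1 <= dep b)%N.
Proof. have := isbP b; rewrite /isb /nk_dep; lia. Qed.
Lemma dep_lek (b : B) : (dep b <= k)%N.
Proof. have := isbP b; rewrite /isb /nk_dep; lia. Qed.

Definition dl (I J : nat) (e : B) : F := ((ii e == I) && (jj e == J))%:R.

Definition co (v : B -> F) (I J : nat) : F :=
  \sum_(a : B | (ii a == I) && (jj a == J)) v a.

Lemma co_b v (b : B) : co v (ii b) (jj b) = v b.
Proof.
rewrite /co (big_pred1 b) //.


Qed.

Lemma co_b' v (b : B) I J : ii b = I -> jj b = J -> co v I J = v b.
Proof. by move=> <- <-; exact: co_b. Qed.

Lemma co_nb v I J : ~~ isb I J -> co v I J = 0.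
Proof.
move=> H; rewrite /co big_pred0 // => a.
apply/andP => [[/eqP h1 /eqP h2]]; move: H; rewrite -h1 -h2 isbP //.
Qed.

Definition sgnI (i j i' j' : nat) : F :=
  if (i + j == 1)%N then
    if (i' + j' == 1)%N then
      (if (i == 1%N) && (j' == 1%N) then 1
       else if (j == 1%N) && (i' == 1%N) then -1 else 0)
    else 1
  else if (i' + j' == 1)%N then -1 else 0.

Lemma sgnE (a b : B) : nk_sgn F a b = sgnI (ii a) (jj a) (ii b) (jj b).
Proof. by []. Qed.

Lemma sum_cst (a b : B) (w : B -> F) :
  \sum_(c : B) cst a b c * w c = nk_sgn F a b * co w (ii a + ii b) (jj a + jj b).
Proof.
rewrite /co big_distrr /= [RHS]big_mkcond /=; apply: eq_bigr => c _.
by rewrite /nk_cst; case: ifP => _ //; rewrite mul0r.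
Qed.

Lemma ifR (b : bool) (x : F) : (if b then x else 0) = x * b%:R.
Proof. by case: b; rewrite ?mulr1 ?mulr0. Qed.

Lemma dl_case I J (a : B) : (dl I J a = 0) \/ (ii a = I /\ jj a = J /\ dl I J a = 1).
Proof.
rewrite /dl; case: (ii a =P I) => [->|]; case: (jj a =P J) => [->|] //=; by [left | right].
Qed.

Lemma mbr_dl I J (b : B) e :
  br (dl I J) b e = (if isb I J then sgnI I J (ii b) (jj b) else 0) * dl (I + ii b) (J + jj b) e.
Proof.
rewrite /mbr; case: ifP => H.
  have [a0 [h1 h2]] := isb_ex H.
  rewrite (bigD1 a0) //= big1 ?addr0.
    by rewrite /dl h1 h2 !eqxx mul1r /nk_cst h1 h2 sgnE h1 h2 ifR.
  move=> a Ha; case: (dl_case I J a) => [->|[g1 [g2 _]]]; first by rewrite mul0r.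
  have Ea : a = a0 by apply: nk_inj; rewrite ?g1 ?g2 ?h1 ?h2.
  by rewrite Ea eqxx in Ha.
rewrite mul0r big1 // => a _.
case: (dl_case I J a) => [->|[g1 [g2 _]]]; first by rewrite mul0r.
by move: H; rewrite -g1 -g2 isbP.
Qed.

Lemma mbr_ext (v w : B -> F) b e : (forall e, v e = w e) -> br v b e = br w b e.
Proof. by move=> h; rewrite /mbr; apply: eq_bigr => a _; rewrite h. Qed.

Lemma mbr_form2 (v : B -> F) c1 I1 J1 c2 I2 J2 b e :
  (forall e, v e = c1 * dl I1 J1 e + c2 * dl I2 J2 e) ->
  br v b e = c1 * ((if isb I1 J1 then sgnI I1 J1 (ii b) (jj b) else 0) * dl (I1 + ii b) (J1 + jj b) e)
           + c2 * ((if isb I2 J2 then sgnI I2 J2 (ii b) (jj b) else 0) * dl (I2 + ii b) (J2 + jj b) e).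
Proof.
move=> h; rewrite (mbr_ext _ _ h) -!mbr_dl /mbr !big_distrr -big_split /=.
by apply: eq_bigr => a _; rewrite mulrDl !mulrA.
Qed.

Lemma mbr_form3 (v : B -> F) c1 I1 J1 c2 I2 J2 c3 I3 J3 b e :
  (forall e, v e = c1 * dl I1 J1 e + c2 * dl I2 J2 e + c3 * dl I3 J3 e) ->
  br v b e = c1 * ((if isb I1 J1 then sgnI I1 J1 (ii b) (jj b) else 0) * dl (I1 + ii b) (J1 + jj b) e)
           + c2 * ((if isb I2 J2 then sgnI I2 J2 (ii b) (jj b) else 0) * dl (I2 + ii b) (J2 + jj b) e)
           + c3 * ((if isb I3 J3 then sgnI I3 J3 (ii b) (jj b) else 0) * dl (I3 + ii b) (J3 + jj b) e).
Proof.
move=> h; rewrite (mbr_ext _ _ h) -!mbr_dl /mbr !big_distrr -!big_split /=.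
by apply: eq_bigr => a _; rewrite !mulrDl !mulrA.
Qed.


Lemma sgnI_1l I J i j : (I + J = 1)%N -> (i + j != 1)%N -> sgnI I J i j = 1.
Proof. by rewrite /sgnI => -> /negbTE ->. Qed.
Lemma sgnI_1r I J i j : (I + J != 1)%N -> (i + j = 1)%N -> sgnI I J i j = -1.
Proof. by rewrite /sgnI => /negbTE -> ->. Qed.
Lemma sgnI_00 I J i j : (I + J != 1)%N -> (i + j != 1)%N -> sgnI I J i j = 0.
Proof. by rewrite /sgnI => /negbTE -> /negbTE ->. Qed.
Lemma sgnI_diag I J : sgnI I J I J = 0.
Proof.
rewrite /sgnI; have [h|h] := boolP (I + J == 1)%N; rewrite ?h ?(negbTE h) //.
have -> : ((I == 1) && (J == 1))%N = false by lia.
by have -> : ((J == 1) && (I == 1))%N = false by lia.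
Qed.

Lemma isbT I J : (0 < I)%N -> (0 < J)%N -> (I + J <= k)%N -> isb I J.
Proof. by move=> *; rewrite /isb; apply/orP; right; apply/and3P. Qed.
Lemma isb_big I J : (k < I + J)%N -> isb I J = false.
Proof. rewrite /isb => h; apply/negbTE; apply/negP; lia. Qed.

Lemma dl_big I J e : (k < I + J)%N -> dl I J e = 0.
Proof.
move=> h; case: (dl_case I J e) => [//|[h1 [h2 _]]].
by have := isbP e; rewrite h1 h2 isb_big.
Qed.

Lemma dl_dep I J e : dl I J e != 0 -> dep e = (I + J)%N.
Proof. by case: (dl_case I J e) => [->|[h1 [h2 _]]]; rewrite ?eqxx // /nk_dep h1 h2. Qed.

Lemma cst_dep a b e : cst a b e != 0 -> dep e = (dep a + dep b)%N.
Proof.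
rewrite /nk_cst; case: ifP => [/andP[/eqP h1 /eqP h2] _|]; last by rewrite eqxx.
rewrite /nk_dep h1 h2; lia.
Qed.

Lemma mbr_homog m (v : B -> F) b : homog dep m v -> homog dep (m + dep b) (br v b).
Proof.
move=> h e; rewrite /mbr.
case: (pickP (fun a => v a * cst a b e != 0)) => [a /= Ha|H0]; last first.
  by rewrite big1 ?eqxx // => a _; apply/eqP; move: (H0 a) => /= /negbFE.
move=> _; move: Ha; rewrite mulf_eq0 negb_or => /andP[/h h1 /cst_dep h2].
by rewrite h2 h1.
Qed.

Lemma mbr_hom0 m (v : B -> F) b e : homog dep m v -> (m != 1)%N -> (dep b != 1)%N -> br v b e = 0.
Proof.
move=> h hm hb; rewrite /mbr big1 // => a _.
case: (v a =P 0) => [->|/eqP na]; first by rewrite mul0r.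
rewrite /nk_cst; case: ifP => _; last by rewrite mulr0.
by rewrite sgnE sgnI_00 ?mulr0 //; rewrite -/(nk_dep a) ?h.
Qed.

Lemma dep1 (a : B) : dep a = 1%N -> (ii a = 1%N /\ jj a = 0%N) \/ (ii a = 0%N /\ jj a = 1%N).
Proof. rewrite /nk_dep => h; lia. Qed.

Lemma hom1 (v : B -> F) (x y : B) : ii x = 1%N -> jj x = 0%N -> ii y = 0%N -> jj y = 1%N ->
  homog dep 1 v -> forall e, v e = v x * dl 1 0 e + v y * dl 0 1 e.
Proof.
move=> xi xj yi yj h e.
case: (nk_dep e =P 1%N) => [/dep1 [[h1 h2]|[h1 h2]]|ne].
- have -> : e = x by apply: nk_inj; rewrite ?h1 ?h2 ?xi ?xj.
  by rewrite /dl xi xj /= mulr1 mulr0 addr0.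
- have -> : e = y by apply: nk_inj; rewrite ?h1 ?h2 ?yi ?yj.
  by rewrite /dl yi yj /= mulr1 mulr0 add0r.
have -> : v e = 0 by case: (v e =P 0) => // /eqP /h /ne.
rewrite /dl; case: (dl_case 1 0 e) => [E1|[h1 [h2 _]]]; last by case: ne; rewrite /nk_dep h1 h2.
case: (dl_case 0 1 e) => [E2|[h1 [h2 _]]]; last by case: ne; rewrite /nk_dep h1 h2.
by move: E1 E2; rewrite /dl => -> ->; rewrite !mulr0 addr0.
Qed.

Lemma DEC (b : B) : (2 <= dep b)%N -> exists a b' : B,
  [/\ dep a = 1%N, (dep b' < dep b)%N, nk_sgn F a b' = 1, (ii a + ii b' = ii b)%N & (jj a + jj b' = jj b)%N].
Proof.
move=> h2; have := isbP b; rewrite /isb => /orP[/eqP|/and3P[hi hj hk']]; first by move: h2; rewrite /nk_dep; lia.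
case: (ltnP 1 (ii b)) => h.
  have [a [ai aj]] := isb_ex (I:=1) (J:=0) isT.
  have [b' [bi bj]] := isb_ex (isbT (I:=(ii b).-1) (J:=jj b) ltac:(lia) hj ltac:(lia)).
  exists a, b'; split; rewrite /nk_dep ?ai ?aj ?bi ?bj //; try lia.
  by rewrite sgnE sgnI_1l //; rewrite ?ai ?aj ?bi ?bj; lia.
case: (ltnP 1 (jj b)) => h'.
  have [a [ai aj]] := isb_ex (I:=0) (J:=1) isT.
  have [b' [bi bj]] := isb_ex (isbT (I:=ii b) (J:=(jj b).-1) hi ltac:(lia) ltac:(lia)).
  exists a, b'; split; rewrite /nk_dep ?ai ?aj ?bi ?bj //; try lia.
  by rewrite sgnE sgnI_1l //; rewrite ?ai ?aj ?bi ?bj; lia.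
have [a [ai aj]] := isb_ex (I:=1) (J:=0) isT.
have [b' [bi bj]] := isb_ex (I:=0) (J:=1) isT.
exists a, b'; split; rewrite /nk_dep ?ai ?aj ?bi ?bj //; try lia.
by rewrite sgnE ai aj bi bj.
Qed.

Lemma dsum1 (b : B) : dsum dep [:: b] = dep b.
Proof. by rewrite /dsum big_seq1. Qed.
Lemma dsum_cons (b : B) s : dsum dep (b :: s) = (dep b + dsum dep s)%N.
Proof. by rewrite /dsum big_cons. Qed.
Lemma dsum_pos (s : seq B) : s != [::] -> (0 < dsum dep s)%N.
Proof. case: s => // b s _; rewrite dsum_cons; have := dep_ge1 b; lia. Qed.

Lemma U n1 n2 (E1 E2 : seq B -> B -> F) :
  tanaka_in cst dep n1.+1 0 E1 -> tanaka_in cst dep n2.+1 0 E2 ->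
  (forall b, dep b = 1%N -> forall e, E1 [:: b] e = E2 [:: b] e) -> forall s e, E1 s e = E2 s e.
Proof.
move=> [A1 B1 C1 D1 G1] [A2 B2 C2 D2 G2] H.
have Hs : forall m b, (dep b <= m)%N -> forall e, E1 [:: b] e = E2 [:: b] e.
  elim=> [|m IH] b hb e; first by have := dep_ge1 b; lia.
  case: (ltnP (dep b) 2) => h; first by apply: H; have := dep_ge1 b; lia.
  have [a [b' [da db' sg hi hj]]] := DEC h.
  have e1 := G1 a b' [::] e; rewrite sum_cst sg hi hj co_b mul1r in e1.
  have e2 := G2 a b' [::] e; rewrite sum_cst sg hi hj co_b mul1r in e2.
  have c1 := C1 [:: a] b'; have c2 := C2 [:: a] b'.
  have d1 := C1 [:: b'] a; have d2 := C2 [:: b'] a.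
  rewrite /= !dsum1 in c1 c2 d1 d2.
  rewrite e1 e2 c1 ?da // c2 ?da // d1 ?d2; try (have := dep_ge1 b'; lia).
  congr (_ - _); apply: mbr_ext => e'; apply: IH; lia.
elim/last_ind => [|s b IH] e; first by rewrite A1 ?A2 // /dsum big_nil.
case: (s =P [::]) => [->|/eqP ns]; first by apply: (Hs (dep b)).
have hs := dsum_pos ns.
by rewrite C1 // C2 //; apply: mbr_ext => e'; apply: IH.
Qed.

Lemma Z0 n : tanaka_in cst dep n.+1 0 (fun _ _ => 0).
Proof.
split => //.
- by move=> s _ a; rewrite eqxx.
- by move=> s b _ e; rewrite /mbr big1 // => a _; rewrite mul0r.
- by move=> b hb; have := dep_ge1 b; lia.
- by move=> a b s e; rewrite big1 ?subrr // => c _; rewrite mulr0.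
Qed.

Lemma U0 n (E : seq B -> B -> F) : tanaka_in cst dep n.+1 0 E ->
  (forall b, dep b = 1%N -> forall e, E [:: b] e = 0) -> forall s e, E s e = 0.
Proof. by move=> h H s e; apply: (U h (Z0 0) H). Qed.

Lemma sgn1001 : sgnI 1 0 0 1 = 1. Proof. by []. Qed.
Lemma sgn0110 : sgnI 0 1 1 0 = -1. Proof. by []. Qed.
Lemma sgn1010 : sgnI 1 0 1 0 = 0. Proof. by []. Qed.
Lemma sgn0101 : sgnI 0 1 0 1 = 0. Proof. by []. Qed.
Lemma isb10 : isb 1 0. Proof. by []. Qed.
Lemma isb01 : isb 0 1. Proof. by []. Qed.

Ltac nsimp := rewrite ?(addn0, add0n, addSn, addnS).
Ltac ssimp := rewrite ?(sgn1001, sgn0110, sgn1010, sgn0101, isb10, isb01);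
  repeat match goal with
  | |- context [sgnI ?I ?J ?i ?j] => rewrite (@sgnI_1l I J i j); [|lia|lia]
  | |- context [sgnI ?I ?J ?i ?j] => rewrite (@sgnI_1r I J i j); [|lia|lia]
  | |- context [sgnI ?I ?J ?i ?j] => rewrite (@sgnI_00 I J i j); [|lia|lia]
  | |- context [isb ?I ?J] => rewrite (@isbT I J); [|lia|lia|lia]
  | |- context [isb ?I ?J] => rewrite (@isb_big I J); [|lia]
  end.

Section G0.
Variable G : seq B -> B -> F.
Variable n0 : nat.
Hypothesis HG : tanaka_in cst dep n0.+1 0 G.
Variables x y : B.
Hypotheses (xi : ii x = 1%N) (xj : jj x = 0%N) (yi : ii y = 0%N) (yj : jj y = 1%N).

Lemma depx : dep x = 1%N. Proof. by rewrite /nk_dep xi xj. Qed.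
Lemma depy : dep y = 1%N. Proof. by rewrite /nk_dep yi yj. Qed.

Lemma G_hom1 b : dep b = 1%N -> forall e, G [:: b] e = G [:: b] x * dl 1 0 e + G [:: b] y * dl 0 1 e.
Proof.
move=> hb; apply: hom1 => //; case: HG => _ Hh _ _ _.
by have := Hh [:: b]; rewrite dsum1 hb subn0; apply.
Qed.

Lemma G_br2 a b : (0 < dsum dep [:: a])%N -> forall e, G [:: a; b] e = br (G [:: a]) b e.
Proof. by case: HG => _ _ C _ _ h e; apply: (C [:: a] b h). Qed.

Lemma G0_n1 : forall n, (n.+1 < k)%N -> forall b, ii b = n.+1 -> jj b = 1%N -> forall e,
  G [:: b] e = (G [:: y] y + n.+1%:R * G [:: x] x) * dl n.+1 1 e + (n%:R * G [:: x] y) * dl n 2 e.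
Proof.
have [_ _ _ _ D] := HG.
elim=> [|n IH] hn b bi bj e.
  have := D x y [::] e.
  rewrite sum_cst sgnE xi xj yi yj (co_b' _ (b:=b)) ?bi ?bj //.
  rewrite !G_br2 ?dsum1 ?depx ?depy //.
  rewrite (mbr_form2 _ _ (G_hom1 depx)) (mbr_form2 _ _ (G_hom1 depy)).
  by rewrite ?xi ?xj ?yi ?yj; nsimp; ssimp; rewrite mul1r => ->; ring.
have [b' [b'i b'j]] := isb_ex (isbT (I:=n.+1) (J:=1) isT isT ltac:(lia)).
have := D x b' [::] e.
rewrite sum_cst sgnE xi xj b'i b'j; nsimp; rewrite (co_b' _ (b:=b)) ?bi ?bj //.
rewrite !G_br2 ?dsum1 ?depx //; last by have := dep_ge1 b'.
rewrite (mbr_form2 _ _ (G_hom1 depx)) (mbr_form2 _ _ (IH ltac:(lia) b' b'i b'j)).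
rewrite ?xi ?xj ?b'i ?b'j; nsimp; ssimp.
by case: n {IH b'i} bi hn => [|n] bi hn; ssimp; rewrite mul1r => ->; ring.
Qed.

Lemma G0_1n : forall n, (n.+1 < k)%N -> forall b, ii b = 1%N -> jj b = n.+1 -> forall e,
  G [:: b] e = (G [:: x] x + n.+1%:R * G [:: y] y) * dl 1 n.+1 e + (n%:R * G [:: y] x) * dl 2 n e.
Proof.
have [_ _ _ _ D] := HG.
elim=> [|n IH] hn b bi bj e.
  have := D x y [::] e.
  rewrite sum_cst sgnE xi xj yi yj (co_b' _ (b:=b)) ?bi ?bj //.
  rewrite !G_br2 ?dsum1 ?depx ?depy //.
  rewrite (mbr_form2 _ _ (G_hom1 depx)) (mbr_form2 _ _ (G_hom1 depy)).
  by rewrite ?xi ?xj ?yi ?yj; nsimp; ssimp; rewrite mul1r => ->; ring.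
have [b' [b'i b'j]] := isb_ex (isbT (I:=1) (J:=n.+1) isT isT ltac:(lia)).
have := D y b' [::] e.
rewrite sum_cst sgnE yi yj b'i b'j; nsimp; rewrite (co_b' _ (b:=b)) ?bi ?bj //.
rewrite !G_br2 ?dsum1 ?depy //; last by have := dep_ge1 b'.
rewrite (mbr_form2 _ _ (G_hom1 depy)) (mbr_form2 _ _ (IH ltac:(lia) b' b'i b'j)).
rewrite ?yi ?yj ?b'i ?b'j; nsimp; ssimp.
by case: n {IH b'j} bj hn => [|n] bj hn; ssimp; rewrite mul1r => ->; ring.
Qed.

End G0.

Section G1.
Hypothesis hF : [pchar F] =i pred0.
Lemma ncancel (N : nat) (a : F) : (0 < N)%N -> N%:R * a = 0 -> a = 0.
Proof.
move=> hN /eqP; rewrite mulf_eq0 => /orP[|/eqP //].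
by rewrite ((pcharf0P F).1 hF N); lia.
Qed.
Variable E : seq B -> B -> F.
Variable n0 : nat.
Hypothesis HE : tanaka_in cst dep n0.+2 1 E.
Variables x y : B.
Hypotheses (xi : ii x = 1%N) (xj : jj x = 0%N) (yi : ii y = 0%N) (yj : jj y = 1%N).

Lemma dx : dep x = 1%N. Proof. by rewrite /nk_dep xi xj. Qed.
Lemma dy : dep y = 1%N. Proof. by rewrite /nk_dep yi yj. Qed.

Lemma HA a : dep a = 1%N -> tanaka_in cst dep n0.+1 0 (fun s => E (a :: s)).
Proof. by move=> ha; case: HE => _ _ _ D4 _; have := D4 a; rewrite ha subnn; apply. Qed.

Lemma E_br2 a b : (1 < dep a)%N -> forall e, E [:: a; b] e = br (E [:: a]) b e.
Proof. by case: HE => _ _ C _ _ h e; apply: (C [:: a] b); rewrite dsum1. Qed.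

Lemma E_hom b : (1 < dep b)%N -> homog dep (dep b - 1) (E [:: b]).
Proof. by case: HE => _ Hh _ _ _ h; have := Hh [:: b]; rewrite dsum1; apply. Qed.

Lemma E_rule a b e : \sum_c cst a b c * E [:: c] e = E [:: a; b] e - E [:: b; a] e.
Proof. by case: HE => _ _ _ _ D; apply: D. Qed.

Lemma E11 c : ii c = 1%N -> jj c = 1%N -> forall e, E [:: c] e = E [:: x; y] e - E [:: y; x] e.
Proof.
move=> ci cj e; rewrite -E_rule sum_cst sgnE xi xj yi yj (co_b' _ (b:=c)) ?ci ?cj //.
by rewrite sgn1001 mul1r.
Qed.

Lemma E11z c : ii c = 1%N -> jj c = 1%N -> forall e, E [:: c] e = 0.
Proof.
move=> ci cj.
have [c21 [c21i c21j]] := isb_ex (isbT (I:=2) (J:=1) isT isT ltac:(lia)).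
have [c31 [c31i c31j]] := isb_ex (isbT (I:=3) (J:=1) isT isT ltac:(lia)).
have [c22 [c22i c22j]] := isb_ex (isbT (I:=2) (J:=2) isT isT ltac:(lia)).
have dc : dep c = 2%N by rewrite /nk_dep ci cj.
have dc21 : dep c21 = 3%N by rewrite /nk_dep c21i c21j.
have hc : homog dep 1 (E [:: c]) by have := E_hom (b:=c); rewrite dc; apply.
have H e : br (E [:: c]) c21 e = 0.
  have := E_rule c c21 e.
  rewrite sum_cst sgnE ci cj c21i c21j sgnI_00 // mul0r.
  rewrite !E_br2 ?dc ?dc21 // (mbr_hom0 (v:=E [:: c21]) (m:=2)) ?dc ?subr0 //.
  by have := E_hom (b:=c21); rewrite dc21; apply.
have H1 := H c31; have H2 := H c22.
rewrite (mbr_form2 _ _ (hom1 xi xj yi yj hc)) c21i c21j in H1.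
rewrite (mbr_form2 _ _ (hom1 xi xj yi yj hc)) c21i c21j in H2.
rewrite /dl ?c31i ?c31j ?c22i ?c22j /= in H1 H2.
have : E [:: c] x = 0 by move: H1; rewrite /sgnI /=; rewrite !mulr1 !mulr0 addr0.
have : E [:: c] y = 0 by move: H2; rewrite /sgnI /=; rewrite !mulr1 !mulr0 add0r.
move=> h2 h1 e; rewrite (hom1 xi xj yi yj hc) h1 h2; ring.
Qed.

Lemma Ex_n1 : forall n, (n.+1 < k)%N -> forall b, ii b = n.+1 -> jj b = 1%N -> forall e,
  E [:: b] e = (n%:R * E [:: x; y] y + 'C(n.+1, 2)%:R * E [:: x; x] x) * dl n 1 e
             + ('C(n, 2)%:R * E [:: x; x] y) * dl n.-1 2 e.
Proof.
elim=> [|n IH] hn b bi bj e.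
  by rewrite (E11z bi bj) !bin_small //; ring.
have [b' [b'i b'j]] := isb_ex (isbT (I:=n.+1) (J:=1) isT isT ltac:(lia)).
have hn' : (n.+1 < k)%N by lia.
have g := G0_n1 (HA dx) xi xj yi yj hn' b'i b'j e; cbv beta in g.
have := E_rule x b' e.
rewrite sum_cst sgnE xi xj b'i b'j; nsimp; rewrite (co_b' _ (b:=b)) ?bi ?bj //.
rewrite g (E_br2 (a:=b')); last by rewrite /nk_dep b'i b'j; lia.
rewrite (mbr_form2 _ _ (IH hn' b' b'i b'j)) ?xi ?xj; nsimp; ssimp.
case: n {IH g b'i hn'} bi hn => [|[|n]] bi hn; ssimp; rewrite mul1r => ->;
  rewrite ?binS ?bin0 ?bin1 ?bin0n /=; ring.
Qed.

Lemma Ey_1n : forall n, (n.+1 < k)%N -> forall b, ii b = 1%N -> jj b = n.+1 -> forall e,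
  E [:: b] e = (n%:R * E [:: y; x] x + 'C(n.+1, 2)%:R * E [:: y; y] y) * dl 1 n e
             + ('C(n, 2)%:R * E [:: y; y] x) * dl 2 n.-1 e.
Proof.
elim=> [|n IH] hn b bi bj e.
  by rewrite (E11z bi bj) !bin_small //; ring.
have [b' [b'i b'j]] := isb_ex (isbT (I:=1) (J:=n.+1) isT isT ltac:(lia)).
have hn' : (n.+1 < k)%N by lia.
have g := G0_1n (HA dy) xi xj yi yj hn' b'i b'j e; cbv beta in g.
have := E_rule y b' e.
rewrite sum_cst sgnE yi yj b'i b'j; nsimp; rewrite (co_b' _ (b:=b)) ?bi ?bj //.
rewrite g (E_br2 (a:=b')); last by rewrite /nk_dep b'i b'j; lia.
rewrite (mbr_form2 _ _ (IH hn' b' b'i b'j)) ?yi ?yj; nsimp; ssimp.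
case: n {IH g b'j hn'} bj hn => [|[|n]] bj hn; ssimp; rewrite mul1r => ->;
  rewrite ?binS ?bin0 ?bin1 ?bin0n /=; ring.
Qed.

Ltac eqsimp := repeat match goal with
 | |- context [(?a == ?b)%N] => (have -> : (a == b)%N = true by lia) || (have -> : (a == b)%N = false by lia)
 end.

Lemma Etrunc : forall a b, dep a = 1%N -> dep b = 1%N -> forall e, E [:: a; b] e = 0.
Proof.
have [m km] : exists m, k = m.+4 by exists (k - 4)%N; lia.
have [bx [bxi bxj]] := isb_ex (isbT (I:=m.+3) (J:=1) isT isT ltac:(lia)).
have [cx [cxi cxj]] := isb_ex (isbT (I:=m.+2) (J:=2) isT isT ltac:(lia)).
have [by' [byi byj]] := isb_ex (isbT (I:=1) (J:=m.+3) isT isT ltac:(lia)).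
have [cy [cyi cyj]] := isb_ex (isbT (I:=2) (J:=m.+2) isT isT ltac:(lia)).
have hm : (m.+3 < k)%N by lia.
have dbx : (1 < dep bx)%N by rewrite /nk_dep bxi bxj.
have dby : (1 < dep by')%N by rewrite /nk_dep byi byj.
(* T1 : [x, bx] = 0 *)
have T1 e : E [:: x; bx] e - br (E [:: bx]) x e = 0.
  rewrite -(@E_br2 bx _ dbx) -E_rule sum_cst co_nb ?mulr0 // xi xj bxi bxj; nsimp.
  by rewrite isb_big //; lia.
have T2 e : E [:: y; bx] e - br (E [:: bx]) y e = 0.
  rewrite -(@E_br2 bx _ dbx) -E_rule sum_cst co_nb ?mulr0 // yi yj bxi bxj; nsimp.
  by rewrite isb_big //; lia.
have T3 e : E [:: y; by'] e - br (E [:: by']) y e = 0.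
  rewrite -(@E_br2 by' _ dby) -E_rule sum_cst co_nb ?mulr0 // yi yj byi byj; nsimp.
  by rewrite isb_big //; lia.
have T4 e : E [:: x; by'] e - br (E [:: by']) x e = 0.
  rewrite -(@E_br2 by' _ dby) -E_rule sum_cst co_nb ?mulr0 // xi xj byi byj; nsimp.
  by rewrite isb_big //; lia.
have gx := G0_n1 (HA dx) xi xj yi yj hm bxi bxj; cbv beta in gx.
have gy := G0_n1 (HA dy) xi xj yi yj hm bxi bxj; cbv beta in gy.
have hx := G0_1n (HA dx) xi xj yi yj hm byi byj; cbv beta in hx.
have hy := G0_1n (HA dy) xi xj yi yj hm byi byj; cbv beta in hy.
have T11 := T1 bx; have T12 := T1 cx; have T21 := T2 bx; have T31 := T3 by'; have T32 := T3 cy;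
  have T41 := T4 by'.
rewrite gx (mbr_form2 _ _ (Ex_n1 hm bxi bxj)) xi xj in T11.
rewrite gx (mbr_form2 _ _ (Ex_n1 hm bxi bxj)) xi xj in T12.
move: T11; rewrite [_.-1]/=; nsimp; ssimp; rewrite /dl bxi bxj; eqsimp; rewrite /= => T11.
move: T12; rewrite [_.-1]/=; nsimp; ssimp; rewrite /dl cxi cxj; eqsimp; rewrite /= => T12.
rewrite gy (mbr_form2 _ _ (Ex_n1 hm bxi bxj)) yi yj in T21.
move: T21; rewrite [_.-1]/=; nsimp; ssimp; rewrite /dl bxi bxj; eqsimp; rewrite /= => T21.
rewrite hy (mbr_form2 _ _ (Ey_1n hm byi byj)) yi yj in T31.
move: T31; rewrite [_.-1]/=; nsimp; ssimp; rewrite /dl byi byj; eqsimp; rewrite /= => T31.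
rewrite hy (mbr_form2 _ _ (Ey_1n hm byi byj)) yi yj in T32.
move: T32; rewrite [_.-1]/=; nsimp; ssimp; rewrite /dl cyi cyj; eqsimp; rewrite /= => T32.
rewrite hx (mbr_form2 _ _ (Ey_1n hm byi byj)) xi xj in T41.
move: T41; rewrite [_.-1]/=; nsimp; ssimp; rewrite /dl byi byj; eqsimp; rewrite /= => T41.
have [c [ci cj]] := isb_ex (isbT (I:=1) (J:=1) isT isT ltac:(lia)).
have e1x := E11 ci cj x; have e1y := E11 ci cj y.
rewrite (E11z ci cj) in e1x. rewrite (E11z ci cj) in e1y.
set a1 := E [:: x; x] x in T11 T12 T21 T31 T32 T41 e1x e1y *.
set a2 := E [:: x; x] y in T11 T12 T21 T31 T32 T41 e1x e1y *.
set a3 := E [:: x; y] x in T11 T12 T21 T31 T32 T41 e1x e1y *.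
set a4 := E [:: x; y] y in T11 T12 T21 T31 T32 T41 e1x e1y *.
set b1 := E [:: y; x] x in T11 T12 T21 T31 T32 T41 e1x e1y *.
set b2 := E [:: y; x] y in T11 T12 T21 T31 T32 T41 e1x e1y *.
set b3 := E [:: y; y] x in T11 T12 T21 T31 T32 T41 e1x e1y *.
set b4 := E [:: y; y] y in T11 T12 T21 T31 T32 T41 e1x e1y *.
set C := 'C(m.+2, 2) in T11 T12 T21 T31 T32 T41.
have eC : 'C(m.+3, 2) = (C + m.+2)%N by rewrite binS bin1.
rewrite eC in T11 T31.
have ea1 : a1 = - (m.+3%:R * a4) by apply/eqP; rewrite -subr_eq0; apply/eqP; rewrite -T41; ring.
have ea4 : a4 = 0.
  apply: (@ncancel (m.+3 * (C + m.+2 + m.+2))); first by rewrite muln_gt0 /= addnS.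
  transitivity (- ((a4 + m.+3%:R * a1) * 1 + m.+2%:R * a2 * 0 -
     ((m.+2%:R * a4 + (C + m.+2)%:R * a1) * (-1 * 1) + C%:R * a2 * (-1 * 0)))); last by rewrite T11 oppr0.
  rewrite ea1; ring.
have ea1' : a1 = 0 by rewrite ea1 ea4 mulr0 oppr0.
have eb4 : b4 = - (m.+3%:R * b1) by apply/eqP; rewrite -subr_eq0; apply/eqP; rewrite -T21; ring.
have eb1 : b1 = 0.
  apply: (@ncancel (m.+3 * (C + m.+2 + m.+2))); first by rewrite muln_gt0 /= addnS.
  transitivity (- ((b1 + m.+3%:R * b4) * 1 + m.+2%:R * b3 * 0 -
     ((m.+2%:R * b1 + (C + m.+2)%:R * b4) * (-1 * 1) + C%:R * b3 * (-1 * 0)))); last by rewrite T31 oppr0.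
  rewrite eb4; ring.
have eb4' : b4 = 0 by rewrite eb4 eb1 mulr0 oppr0.
have ea2 : a2 = 0.
  apply: (@ncancel (C + m.+2)); first by lia.
  by rewrite -T12; ring.
have eb3 : b3 = 0.
  apply: (@ncancel (C + m.+2)); first by lia.
  by rewrite -T32; ring.
have : a3 - b1 = 0 by rewrite -e1x.
rewrite eb1 subr0 => ea3.
have : a4 - b2 = 0 by rewrite -e1y.
rewrite ea4 sub0r => /eqP; rewrite oppr_eq0 => /eqP eb2.
have z1 : E [:: x; x] x = 0 by exact: ea1'.
have z2 : E [:: x; x] y = 0 by exact: ea2.
have z3 : E [:: x; y] x = 0 by exact: ea3.
have z4 : E [:: x; y] y = 0 by exact: ea4.
have z5 : E [:: y; x] x = 0 by exact: eb1.
have z6 : E [:: y; x] y = 0 by exact: eb2.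
have z7 : E [:: y; y] x = 0 by exact: eb3.
have z8 : E [:: y; y] y = 0 by exact: eb4'.
have Hab a' : dep a' = 1%N -> a' = x \/ a' = y.
  move/dep1 => [[h1 h2]|[h1 h2]]; [left|right]; apply: nk_inj; by rewrite ?h1 ?h2 ?xi ?xj ?yi ?yj.
move=> a b da db e.
have hx' := G_hom1 (HA dx) xi xj yi yj; have hy' := G_hom1 (HA dy) xi xj yi yj.
cbv beta in hx', hy'.
case: (Hab a da) => ->; case: (Hab b db) => ->.
- by rewrite (hx' _ dx e) z1 z2; ring.
- by rewrite (hx' _ dy e) z3 z4; ring.
- by rewrite (hy' _ dx e) z5 z6; ring.
- by rewrite (hy' _ dy e) z7 z8; ring.
Qed.


End G1.

Lemma Zall (hF : [pchar F] =i pred0) : forall d, (0 < d)%N -> forall n (E : seq B -> B -> F),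
  tanaka_in cst dep n d E -> forall s e, E s e = 0.
Proof.
elim/ltn_ind => d IH hd [|n] E HE //.
have [A1 B1 C1 D1 G1] := HE.
have [x [xi xj]] := isb_ex (I:=1) (J:=0) isT.
have [y [yi yj]] := isb_ex (I:=0) (J:=1) isT.
have HA a : dep a = 1%N -> forall s e, E (a :: s) e = 0.
  move=> da.
  case: (ltnP 1 d) => hd1.
    have h := D1 a ltac:(lia); rewrite da in h.
    exact: (IH (d - 1)%N ltac:(lia) ltac:(lia) n _ h).
  have d1 : d = 1%N by lia.
  subst d.
  case: n HE {A1 B1 C1 G1} D1 => [|n'] HE D1; first by have := D1 a ltac:(lia).
  have h := D1 a ltac:(lia); rewrite da subnn in h.
  apply: (U0 h) => b db e.
  exact: (Etrunc hF HE xi xj yi yj da db e).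
have HB : forall m b, (dep b <= m)%N -> forall s e, E (b :: s) e = 0.
  elim=> [|m IHm] b hb s e; first by have := dep_ge1 b; lia.
  case: (ltnP (dep b) 2) => h; first by apply: HA; have := dep_ge1 b; lia.
  have [a [b' [da db' sg hi hj]]] := DEC h.
  have e1 := G1 a b' s e; rewrite sum_cst sg hi hj co_b mul1r in e1.
  by rewrite e1 (HA a da) (IHm b') ?subr0 //; lia.
case=> [|b s] e; first by rewrite A1 // /dsum big_nil.
exact: (HB (dep b)).
Qed.

Section Ex.
Variable phi : B -> B -> F.
Hypothesis Hphi : forall b, dep b = 1%N -> homog dep 1 (phi b).
Variables x y : B.
Hypotheses (xi : ii x = 1%N) (xj : jj x = 0%N) (yi : ii y = 0%N) (yj : jj y = 1%N).

Definition Dm (i j : nat) (e : B) : F :=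
  (i%:R * phi x x + j%:R * phi y y) * dl i j e + (i.-1%:R * phi x y) * dl i.-1 j.+1 e
  + (j.-1%:R * phi y x) * dl i.+1 j.-1 e.

Lemma Dm_form i j e : Dm i j e =
  (i%:R * phi x x + j%:R * phi y y) * dl i j e + (i.-1%:R * phi x y) * dl i.-1 j.+1 e
  + (j.-1%:R * phi y x) * dl i.+1 j.-1 e.
Proof. by []. Qed.

Definition Dv (c : B) : B -> F := if (dep c == 1)%N then phi c else Dm (ii c) (jj c).

Lemma Dv1 c : dep c = 1%N -> Dv c = phi c.
Proof. by rewrite /Dv => ->. Qed.
Lemma Dv2 c : dep c != 1%N -> Dv c = Dm (ii c) (jj c).
Proof. by rewrite /Dv => /negbTE ->. Qed.

Lemma dx' : dep x = 1%N. Proof. by rewrite /nk_dep xi xj. Qed.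
Lemma dy' : dep y = 1%N. Proof. by rewrite /nk_dep yi yj. Qed.

Lemma phix e : phi x e = phi x x * dl 1 0 e + phi x y * dl 0 1 e.
Proof. exact: (hom1 xi xj yi yj (Hphi dx')). Qed.
Lemma phiy e : phi y e = phi y x * dl 1 0 e + phi y y * dl 0 1 e.
Proof. exact: (hom1 xi xj yi yj (Hphi dy')). Qed.

Lemma DerX b e i j : ii b = i.+1 -> jj b = j.+1 ->
  \sum_c cst x b c * Dv c e = br (Dv x) b e - br (Dv b) x e.
Proof.
move=> bi bj.
have db : dep b != 1%N by rewrite /nk_dep bi bj; lia.
have hb : (i.+1 + j.+1 <= k)%N by rewrite -bi -bj; exact: dep_lek.
rewrite sum_cst sgnE xi xj bi bj sgnI_1l //; last by lia.
rewrite mul1r (Dv1 dx') (Dv2 db) bi bj; nsimp.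
rewrite (mbr_form2 _ _ phix) (mbr_form3 _ _ (Dm_form _ _)) bi bj xi xj; nsimp.
case: (boolP (isb i.+2 j.+1)) => hi.
  have [c [ci cj]] := isb_ex hi.
  rewrite (co_b' _ (b:=c)) // (Dv2 (c:=c)); last by rewrite /nk_dep ci cj; lia.
  rewrite Dm_form ci cj /=; ssimp.
  by case: i hi hb {bi ci} => [|i] hi hb; case: j hi hb {bj cj} => [|j] hi hb; ssimp; ring.
have hk' : (k < i.+2 + j.+1)%N by move: hi; rewrite /isb; lia.
rewrite co_nb //= !dl_big; first ring.
all: lia.
Qed.

Lemma DerY b e i j : ii b = i.+1 -> jj b = j.+1 ->
  \sum_c cst y b c * Dv c e = br (Dv y) b e - br (Dv b) y e.
Proof.
move=> bi bj.
have db : dep b != 1%N by rewrite /nk_dep bi bj; lia.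
have hb : (i.+1 + j.+1 <= k)%N by rewrite -bi -bj; exact: dep_lek.
rewrite sum_cst sgnE yi yj bi bj sgnI_1l //; last by lia.
rewrite mul1r (Dv1 dy') (Dv2 db) bi bj; nsimp.
rewrite (mbr_form2 _ _ phiy) (mbr_form3 _ _ (Dm_form _ _)) bi bj yi yj; nsimp.
case: (boolP (isb i.+1 j.+2)) => hi.
  have [c [ci cj]] := isb_ex hi.
  rewrite (co_b' _ (b:=c)) // (Dv2 (c:=c)); last by rewrite /nk_dep ci cj; lia.
  rewrite Dm_form ci cj /=; ssimp.
  by case: i hi hb {bi ci} => [|i] hi hb; case: j hi hb {bj cj} => [|j] hi hb; ssimp; ring.
have hk' : (k < i.+1 + j.+2)%N by move: hi; rewrite /isb; lia.
rewrite co_nb //= !dl_big; first ring.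
all: lia.
Qed.

Lemma DerXr b e i j : ii b = i.+1 -> jj b = j.+1 ->
  \sum_c cst b x c * Dv c e = br (Dv b) x e - br (Dv x) b e.
Proof.
move=> bi bj.
have db : dep b != 1%N by rewrite /nk_dep bi bj; lia.
have hb : (i.+1 + j.+1 <= k)%N by rewrite -bi -bj; exact: dep_lek.
rewrite sum_cst sgnE xi xj bi bj sgnI_1r //; last by lia.
rewrite (Dv1 dx') (Dv2 db) bi bj; nsimp.
rewrite (mbr_form2 _ _ phix) (mbr_form3 _ _ (Dm_form _ _)) bi bj xi xj; nsimp.
case: (boolP (isb i.+2 j.+1)) => hi.
  have [c [ci cj]] := isb_ex hi.
  rewrite (co_b' _ (b:=c)) // (Dv2 (c:=c)); last by rewrite /nk_dep ci cj; lia.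
  rewrite Dm_form ci cj /=; ssimp.
  by case: i hi hb {bi ci} => [|i] hi hb; case: j hi hb {bj cj} => [|j] hi hb; ssimp; ring.
have hk' : (k < i.+2 + j.+1)%N by move: hi; rewrite /isb; lia.
rewrite co_nb //= !dl_big; first ring.
all: lia.
Qed.

Lemma DerYr b e i j : ii b = i.+1 -> jj b = j.+1 ->
  \sum_c cst b y c * Dv c e = br (Dv b) y e - br (Dv y) b e.
Proof.
move=> bi bj.
have db : dep b != 1%N by rewrite /nk_dep bi bj; lia.
have hb : (i.+1 + j.+1 <= k)%N by rewrite -bi -bj; exact: dep_lek.
rewrite sum_cst sgnE yi yj bi bj sgnI_1r //; last by lia.
rewrite (Dv1 dy') (Dv2 db) bi bj; nsimp.
rewrite (mbr_form2 _ _ phiy) (mbr_form3 _ _ (Dm_form _ _)) bi bj yi yj; nsimp.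
case: (boolP (isb i.+1 j.+2)) => hi.
  have [c [ci cj]] := isb_ex hi.
  rewrite (co_b' _ (b:=c)) // (Dv2 (c:=c)); last by rewrite /nk_dep ci cj; lia.
  rewrite Dm_form ci cj /=; ssimp.
  by case: i hi hb {bi ci} => [|i] hi hb; case: j hi hb {bj cj} => [|j] hi hb; ssimp; ring.
have hk' : (k < i.+1 + j.+2)%N by move: hi; rewrite /isb; lia.
rewrite co_nb //= !dl_big; first ring.
all: lia.
Qed.

Lemma Dv_homog c : homog dep (dep c) (Dv c).
Proof.
case: (nk_dep c =P 1%N) => [h|h]; first by rewrite (Dv1 h) h; apply: Hphi.
rewrite (Dv2 (introN eqP h)).
have := isbP c; rewrite /isb => /orP[/eqP h'|/and3P[hi hj _]]; first by case: h.
move=> e; rewrite Dm_form.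
case: (dl_case (ii c) (jj c) e) => [E1|[h1 [h2 _]]]; last by rewrite /nk_dep h1 h2.
case: (dl_case (ii c).-1 (jj c).+1 e) => [E2|[h1 [h2 _]]]; last by rewrite /nk_dep /nk_dep h1 h2; lia.
case: (dl_case (ii c).+1 (jj c).-1 e) => [E3|[h1 [h2 _]]]; last by rewrite /nk_dep h1 h2; lia.
by rewrite E1 E2 E3 !mulr0 !addr0 eqxx.
Qed.

Lemma Der a b e : \sum_c cst a b c * Dv c e = br (Dv a) b e - br (Dv b) a e.
Proof.
have Hab a' : dep a' = 1%N -> a' = x \/ a' = y.
  move/dep1 => [[h1 h2]|[h1 h2]]; [left|right]; apply: nk_inj; by rewrite ?h1 ?h2 ?xi ?xj ?yi ?yj.
have H2 c : dep c != 1%N -> exists i j, ii c = i.+1 /\ jj c = j.+1.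
  move=> hc; have := isbP c; rewrite /isb => /orP[/eqP h'|/and3P[hi hj _]]; first by case/eqP: hc.
  by exists (ii c).-1, (jj c).-1; split; lia.
case: (nk_dep a =P 1%N) => [da|/eqP da]; case: (nk_dep b =P 1%N) => [db|/eqP db].
- have [c [ci cj]] := isb_ex (isbT (I:=1) (J:=1) isT isT ltac:(lia)).
  have dc : dep c != 1%N by rewrite /nk_dep ci cj.
  case: (Hab a da) => ->; case: (Hab b db) => ->;
    rewrite ?sum_cst ?sgnE ?sgnI_diag ?mul0r ?subrr //.
  + rewrite xi xj yi yj (co_b' _ (b:=c)) // (Dv2 dc) Dm_form ci cj (Dv1 dx') (Dv1 dy').
    rewrite (mbr_form2 _ _ phix) (mbr_form2 _ _ phiy) xi xj yi yj; nsimp; rewrite ?(sgn1001, sgn0110, sgn1010, sgn0101, isb10, isb01) /=; ring.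
  + rewrite xi xj yi yj (co_b' _ (b:=c)) // (Dv2 dc) Dm_form ci cj (Dv1 dx') (Dv1 dy').
    rewrite (mbr_form2 _ _ phix) (mbr_form2 _ _ phiy) xi xj yi yj; nsimp; rewrite ?(sgn1001, sgn0110, sgn1010, sgn0101, isb10, isb01) /=; ring.
- have [i [j [bi bj]]] := H2 b db.
  by case: (Hab a da) => ->; [exact: DerX bi bj | exact: DerY bi bj].
- have [i [j [ai aj]]] := H2 a da.
  by case: (Hab b db) => ->; [exact: DerXr ai aj | exact: DerYr ai aj].
rewrite sum_cst sgnE sgnI_00 ?mul0r; try by rewrite -/(nk_dep _).
rewrite (@mbr_hom0 (dep a) (Dv a) b e (Dv_homog (c:=a))) // (@mbr_hom0 (dep b) (Dv b) a e (Dv_homog (c:=b))) // ?subr0 //.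
Qed.

Definition Fs (s : seq B) (v : B -> F) : B -> F := foldl (fun v b => br v b) v s.
Definition Eex (s : seq B) : B -> F := if s is c :: s' then Fs s' (Dv c) else fun _ => 0.

Lemma Fs_ext s : forall v w, (forall e, v e = w e) -> forall e, Fs s v e = Fs s w e.
Proof.
elim: s => [|b s IH] v w h e //=; apply: IH => e'; exact: mbr_ext.
Qed.

Lemma br_sum (l : B -> F) (w : B -> B -> F) b e :
  br (fun e => \sum_c l c * w c e) b e = \sum_c l c * br (w c) b e.
Proof.
rewrite /mbr; under eq_bigr do rewrite big_distrl.
rewrite exchange_big; apply: eq_bigr => c _; rewrite big_distrr; apply: eq_bigr => a _ /=.
by rewrite mulrA.
Qed.

Lemma br_sub (v w : B -> F) b e : br (fun e => v e - w e) b e = br v b e - br w b e.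
Proof. by rewrite /mbr -sumrB; apply: eq_bigr => a _; rewrite mulrBl. Qed.

Lemma Fs_sum s : forall (l : B -> F) (w : B -> B -> F) e,
  Fs s (fun e => \sum_c l c * w c e) e = \sum_c l c * Fs s (w c) e.
Proof.
elim: s => [|b s IH] l w e //=.
transitivity (Fs s (fun e => \sum_c l c * br (w c) b e) e); last exact: IH.
by apply: Fs_ext => e'; apply: br_sum.
Qed.

Lemma Fs_sub s : forall (v w : B -> F) e, Fs s (fun e => v e - w e) e = Fs s v e - Fs s w e.
Proof.
elim: s => [|b s IH] v w e //=.
transitivity (Fs s (fun e => br v b e - br w b e) e); last exact: IH.
by apply: Fs_ext => e'; apply: br_sub.
Qed.

Lemma Fs_homog s : forall m v, homog dep m v -> homog dep (m + dsum dep s) (Fs s v).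
Proof.
elim: s => [|b s IH] m v h /=; first by rewrite /dsum big_nil addn0.
rewrite dsum_cons addnA; apply: IH; exact: mbr_homog.
Qed.

Lemma Eex_tanaka : tanaka_in cst dep 1 0 Eex.
Proof.
split.
- case=> [|c s] // h; exfalso; move: h; rewrite dsum_cons; have := dep_ge1 c; lia.
- case=> [|c s] h; first by move: h; rewrite /dsum big_nil.
  by rewrite subn0 dsum_cons; apply: Fs_homog; apply: Dv_homog.
- case=> [|c s] b h e; first by move: h; rewrite /dsum big_nil.
  by rewrite /= /Fs foldl_rcons.
- by move=> b hb; have := dep_ge1 b; lia.
- move=> a b s e /=.
  rewrite -(Fs_sum s (cst a b) Dv e).
  transitivity (Fs s (fun e => br (Dv a) b e - br (Dv b) a e) e); last exact: Fs_sub.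
  by apply: Fs_ext => e'; apply: Der.
Qed.

Lemma Eex1 b : dep b = 1%N -> forall e, Eex [:: b] e = phi b e.
Proof. by move=> h e; rewrite /= (Dv1 h). Qed.

End Ex.

End NK.

Unset Implicit Arguments.
Set Strict Implicit.

Theorem theorem6 (F : fieldType) (hF : [pchar F] =i pred0) (k : nat) (hk : (3 < k)%N) :
  (forall d : nat, (0 < d)%N ->
     forall E : seq (nkB k) -> nkB k -> F,
       tanaka_comp (@nk_cst F k) (@nk_dep k) d E ->
       forall s e, E s e = 0)
  /\
  (forall phi : nkB k -> nkB k -> F,
     (forall b, nk_dep b = 1%N -> homog (@nk_dep k) 1 (phi b)) ->
     exists E : seq (nkB k) -> nkB k -> F,
       tanaka_comp (@nk_cst F k) (@nk_dep k) 0 E /\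
       forall b, nk_dep b = 1%N -> forall e, E [:: b] e = phi b e)
  /\
  (forall E1 E2 : seq (nkB k) -> nkB k -> F,
     tanaka_comp (@nk_cst F k) (@nk_dep k) 0 E1 ->
     tanaka_comp (@nk_cst F k) (@nk_dep k) 0 E2 ->
     (forall b, nk_dep b = 1%N -> forall e, E1 [:: b] e = E2 [:: b] e) ->
     forall s e, E1 s e = E2 s e).
Proof.
split; [|split].
- move=> d hd E hE s e; exact: (Zall hk hF hd hE s e).
- move=> phi Hphi.
  have [x [xi xj]] := isb_ex hk (I:=1) (J:=0) isT.
  have [y [yi yj]] := isb_ex hk (I:=0) (J:=1) isT.
  exists (Eex phi x y); split; first exact: (Eex_tanaka hk Hphi xi xj yi yj).
  exact: Eex1.
- move=> E1 E2 h1 h2 H s e; rewrite /tanaka_comp in h1 h2; exact: (U hk h1 h2 H s e).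
Qed.
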